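(* Let $D$ be a dataset, $\Omega=\{\omega_1,\dots,\omega_k\}$ a finite set of outcomes, $q$ a real-valued quality function with sensitivity $\Delta>0$, and $\varepsilon>0$; let $q_*=\max_i q(D,\omega_i)$. Then the output distributions of the Permute-and-Flip mechanism and of Intermediate Algorithm A (both defined below) on these inputs are the same.
   Context: $\mathrm{Expo}(\lambda)$ denotes the exponential distribution with rate $\lambda$, density $\lambda e^{-\lambda x}\mathbf{1}[x\ge0]$. $\mathrm{Bernoulli}(p)$ equals $1$ with probability $p$. Permute-and-Flip: compute $q_*$; draw a uniformly random permutation $\pi$ of $\{1,\dots,k\}$; for $j=1,\dots,k$ in order, let $r=\pi(j)$, $p=\exp\left(\frac{\varepsilon}{2\Delta}(q(D,\omega_r)-q_* )\right)$, and flip an independent $\mathrm{Bernoulli}(p)$ coin; if it equals $1$, return $r$ and stop. Intermediate Algorithm A: compute $q_*$; for each $i=1,\dots,k$ independently set $v_i=q(D,\omega_i)+X_i$ with $X_i\sim\mathrm{Expo}(\varepsilon/(2\Delta))$; let $S=\{i: v_i\ge q_*\}$ (nonempty, since it contains any index attaining $q_*$); return an element of $S$ chosen uniformly at random. *)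

(* Defs.v *)
From HB Require Import structures.
From mathcomp Require Import all_boot all_order all_algebra all_fingroup.
From mathcomp Require Import all_classical all_reals all_analysis.
Set Implicit Arguments. Unset Strict Implicit. Unset Printing Implicit Defensive.
Import Order.TTheory GRing.Theory Num.Theory.
Local Open Scope classical_set_scope.
Local Open Scope ring_scope.

(* Outcomes are indexed by 'I_k.+1 (a nonempty finite outcome set of size k.+1). *)

Definition qstar {R : realType} {k : nat} (q : 'I_k.+1 -> R) : R :=
  \big[Num.max/q ord0]_(i < k.+1) q i.

Definition pf_coin {R : realType} {k : nat} (eps Delta : R) (q : 'I_k.+1 -> R)
    (i : 'I_k.+1) : R :=
  expR (eps / (2 * Delta) * (q i - qstar q)).

(* Probability that Permute-and-Flip returns r: a uniformly random permutation
   pi, then at position j the coin of pi j is the first to come up 1. *)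
Definition permute_and_flip_prob {R : realType} {k : nat} (eps Delta : R)
    (q : 'I_k.+1 -> R) (r : 'I_k.+1) : R :=
  (#|{perm 'I_k.+1}|%:R)^-1 *
  \sum_(pi : {perm 'I_k.+1})
     \sum_(j : 'I_k.+1 | pi j == r)
        ((\prod_(l : 'I_k.+1 | (l < j)%N) (1 - pf_coin eps Delta q (pi l)))
           * pf_coin eps Delta q r).

Definition mutually_independent {d} {T : measurableType d} {R : realType}
    (P : probability T R) {n : nat} (X : 'I_n -> T -> R) : Prop :=
  forall B : 'I_n -> set R, (forall i, measurable (B i)) ->
    P (\bigcap_(i in [set: 'I_n]) (X i @^-1` B i)) =
    (\prod_(i < n) P (X i @^-1` B i))%E.

Definition algA_set {d} {T : measurableType d} {R : realType} {k : nat}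
    (q : 'I_k.+1 -> R) (X : 'I_k.+1 -> T -> R) (w : T) : {set 'I_k.+1} :=
  [set i | qstar q <= q i + X i w].

(* Probability that Algorithm A returns r: S is computed, then an element of S
   is chosen uniformly, i.e. r is returned with conditional probability
   1[r \in S]/|S|. *)
Definition algA_prob {d} {T : measurableType d} {R : realType}
    (P : probability T R) {k : nat} (q : 'I_k.+1 -> R)
    (X : 'I_k.+1 -> T -> R) (r : 'I_k.+1) : \bar R :=
  (\int[P]_w ((r \in algA_set q X w)%:R / #|algA_set q X w|%:R)%:E)%E.

(* Main.v *)
Require Import Defs.
From HB Require Import structures.
From mathcomp Require Import all_boot all_order all_algebra all_fingroup.
From mathcomp Require Import all_classical all_reals all_analysis.
Import Order.TTheory GRing.Theory Num.Theory.
Local Open Scope classical_set_scope.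
Local Open Scope ring_scope.

Import numFieldNormedType.Exports.
Section Comb.
Variables (R : realType) (n : nat) (p : 'I_n -> R).

Definition wS (S : {set 'I_n}) : R := \prod_i (if i \in S then p i else 1 - p i).

Definition firstb (pi : {perm 'I_n}) (S : {set 'I_n}) (r : 'I_n) : bool :=
  (r \in S) && [forall s in S, (nat_of_ord ((pi^-1)%g r) <= nat_of_ord ((pi^-1)%g s))%N].

Lemma expand (A : {set 'I_n}) r : r \notin A ->
  \prod_(i in A) (1 - p i) * p r =
  \sum_(S : {set 'I_n}) ((r \in S) && [disjoint S & A])%:R * wS S.
Proof.
move=> rA.
transitivity (\prod_i ((if i \in A then 0 else p i) + (if i == r then 0 else 1 - p i))).
  rewrite [RHS](bigID (mem A)) /=; congr (_ * _).
    apply: eq_bigr => i iA; rewrite iA add0r.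
    by have -> : (i == r) = false by apply/eqP => ir; rewrite -ir iA in rA.
  symmetry; rewrite (bigD1 r) //= (negbTE rA) eqxx addr0 big1 ?mulr1 // => i /andP[iA ir].
  by rewrite (negbTE iA) (negbTE ir) addrC subrK.
rewrite bigA_distr; apply: eq_bigr => S _.
case: (boolP (r \in S)) => rS /=; last first.
  by rewrite mul0r (bigD1 r) //= (negbTE rS) eqxx mul0r.
case: (boolP [disjoint S & A]) => dSA; last first.
  move: dSA; rewrite -setI_eq0 => /set0Pn [i]; rewrite inE => /andP[iS iA].
  by rewrite mul0r (bigD1 i) //= iS iA mul0r.
rewrite mul1r; apply: eq_bigr => i _; case: ifP => iS.
  by rewrite (disjointFr dSA iS).
rewrite ifF //; apply/eqP => ir; by rewrite ir rS in iS.
Qed.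

Lemma first_swap (S : {set 'I_n}) s t (pi : {perm 'I_n}) : s \in S -> t \in S ->
  firstb (pi * tperm s t)%g S t = firstb pi S s.
Proof.
move=> sS tS.
have tSS u : (tperm s t u \in S) = (u \in S).
  by case: tpermP => [->|->|]; rewrite ?sS ?tS.
rewrite /firstb sS tS /=; rewrite invMg tpermV.
apply/forall_inP/forall_inP => H u uS.
  have := H (tperm s t u); rewrite tSS => /(_ uS).
  by rewrite !permM tpermK tpermR.
have := H (tperm s t u); rewrite tSS => /(_ uS).
by rewrite !permM tpermR.
Qed.

Lemma first_unique (S : {set 'I_n}) r (pi : {perm 'I_n}) : r \in S ->
  \sum_(s in S) (firstb pi S s)%:R = 1 :> R.
Proof.
move=> rS.
have [m mS mmin] := @arg_minnP _ r (mem S) (fun s => nat_of_ord ((pi^-1)%g s)) rS.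
have fm : firstb pi S m by rewrite /firstb; apply/andP; split=> //; apply/forall_inP.
rewrite (bigD1 m) //= fm big1 ?addr0 // => s /andP[sS sm].
case: (boolP (firstb pi S s)) => // /andP[_ /forall_inP /(_ m mS) H].
have H2 := mmin s sS.
have : (pi^-1)%g s = (pi^-1)%g m by apply: val_inj; apply/eqP; rewrite eqn_leq H H2.
by move/perm_inj => e; rewrite e eqxx in sm.
Qed.

Lemma count_first (S : {set 'I_n}) r : r \in S ->
  #|S|%:R * \sum_(pi : {perm 'I_n}) (firstb pi S r)%:R = #|{perm 'I_n}|%:R :> R.
Proof.
move=> rS.
have eqc s : s \in S -> \sum_(pi : {perm 'I_n}) (firstb pi S s)%:R =
                        \sum_(pi : {perm 'I_n}) (firstb pi S r)%:R :> R.
  move=> sS; rewrite (reindex_inj (mulIg (tperm r s))) /=.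
  by apply: eq_bigr => pi _; rewrite first_swap.
rewrite mulr_natl -sumr_const.
under eq_bigr => s sS do rewrite -(eqc s sS).
rewrite exchange_big /=.
under eq_bigr => pi _ do rewrite (first_unique _ _ pi rS).
by rewrite sumr_const.
Qed.

Lemma pf_general r :
  (#|{perm 'I_n}|%:R)^-1 *
  \sum_(pi : {perm 'I_n})
     \sum_(j : 'I_n | pi j == r)
        ((\prod_(l : 'I_n | (l < j)%N) (1 - p (pi l))) * p r)
  = \sum_(S : {set 'I_n}) ((r \in S)%:R / #|S|%:R) * wS S.
Proof.
have inner (pi : {perm 'I_n}) : \sum_(j : 'I_n | pi j == r)
        ((\prod_(l : 'I_n | (l < j)%N) (1 - p (pi l))) * p r)
      = \sum_(S : {set 'I_n}) (firstb pi S r)%:R * wS S.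
  rewrite (big_pred1 ((pi^-1)%g r)); last first.
    by move=> j; apply/eqP/eqP => [<-|->]; rewrite ?permK ?permKV.
  rewrite (reindex_inj (@perm_inj _ (pi^-1)%g)) /=.
  under eq_bigr do rewrite permKV.
  rewrite (eq_bigl (fun i => i \in [set i | (nat_of_ord ((pi^-1)%g i) < nat_of_ord ((pi^-1)%g r))%N]%SET));
    last by move=> i /=; rewrite inE.
  rewrite expand; last by rewrite inE ltnn.
  apply: eq_bigr => S _; congr (_%:R * _); rewrite /firstb; congr (_ && _).
  rewrite disjoint_subset; apply/idP/idP.
    by move/fintype.subsetP => H; apply/forall_inP => s sS; have := H s sS; rewrite !inE -leqNgt.
  by move/forall_inP => H; apply/fintype.subsetP => s sS; rewrite !inE -leqNgt (H s sS).
under eq_bigr do rewrite inner.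
rewrite exchange_big /= mulr_sumr; apply: eq_bigr => S _.
rewrite -mulr_suml mulrA; congr (_ * _).
case rS: (r \in S); last first.
  by rewrite big1 ?mulr0 ?mul0r // => pi _; rewrite /firstb rS.
have H := count_first S r rS.
have S0 : #|S|%:R != 0 :> R.
  by rewrite pnatr_eq0 -lt0n card_gt0; apply/set0Pn; exists r.
have P0 : #|{perm 'I_n}|%:R != 0 :> R by rewrite pnatr_eq0 card_Sn -lt0n fact_gt0.
have -> : \sum_(pi : {perm 'I_n}) (firstb pi S r)%:R = #|{perm 'I_n}|%:R / #|S|%:R :> R.
  by rewrite -H (mulrC (#|S|%:R)) mulfK.
by rewrite mulrA mulVf // mul1r.
Qed.

End Comb.
Lemma exp_tail (R : realType) (la c : R) : 0 < la -> 0 <= c ->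
  exponential_prob la `[c, +oo[ = (expR (- la * c))%:E.
Proof.
move=> la0 c0.
have cexpNM : continuous (fun z : R^o => expR (- la * z)).
  move=> z; apply: continuous_comp; last exact: continuous_expR.
  by apply: continuousM => //; apply: (@continuousN _ R^o); exact: cst_continuous.
rewrite /exponential_prob.
rewrite (@ge0_continuous_FTC2y _ _ (fun x => - (expR (- la * x))) _ 0)//.
- by rewrite EFinN sub0e oppeK.
- by move=> x _; apply: exponential_pdf_ge0; exact: ltW.
- apply: (@continuous_subspaceW R^o _ _ [set` `[0, +oo[%R]).
    by move=> x /=; rewrite !in_itv /= !andbT => /(le_trans c0).
  exact: within_continuous_exponential_pdf.
- rewrite -oppr0; apply: cvgN.
  rewrite (_ : (fun x => expR (- la * x)) =
               (fun z => expR (- z)) \o (fun z => la * z)); last first.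
    by apply: eq_fun => x; rewrite mulNr.
  apply: (@cvg_comp _ _ _ _ _ _ (pinfty_nbhs R)); last exact: cvgr_expR.
  exact: gt0_cvgMry.
- by apply: cvgN; apply/cvg_at_right_filter; exact: cexpNM.
- move=> z; rewrite in_itv /= andbT => cz.
  by apply: derive1_exponential_pdf; rewrite in_itv /= andbT (le_lt_trans c0 cz).
Qed.
Theorem lemma1 (R : realType) (Dset : Type) (neighbor : Dset -> Dset -> Prop)
  (k : nat) (q : Dset -> 'I_k.+1 -> R) (D : Dset) (Delta eps : R)
  (hDelta : 0 < Delta) (heps : 0 < eps)
  (hsens : forall D1 D2 i, neighbor D1 D2 -> `|q D1 i - q D2 i| <= Delta)
  (d : measure_display) (T : measurableType d) (P : probability T R)
  (X : 'I_k.+1 -> T -> R)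
  (hXmeas : forall i, measurable_fun setT (X i))
  (hXlaw : forall i (A : set R), measurable A ->
     P (X i @^-1` A) = exponential_prob (eps / (2 * Delta)) A)
  (hXind : mutually_independent P X) :
  forall r : 'I_k.+1,
    ((permute_and_flip_prob eps Delta (q D) r)%:E = algA_prob P (q D) X r)%E.
Proof.
move=> r.
set la := eps / (2 * Delta).
have la0 : 0 < la by rewrite /la divr_gt0 // mulr_gt0.
set qq := q D.
set p := pf_coin eps Delta qq.
rewrite /permute_and_flip_prob (@pf_general R k.+1 p r).
set c := fun i => qstar qq - qq i.
have c0 i : 0 <= c i.
  rewrite /c subr_ge0 /qstar (bigD1 i) //=.
  by rewrite le_max lexx.
set B := fun (S : {set 'I_k.+1}) i =>
  if i \in S then [set` `[c i, +oo[] else [set` `]-oo, c i[].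
set E := fun S => \bigcap_(i in [set: 'I_k.+1]) (X i @^-1` B S i).
have mB S i : measurable (B S i) by rewrite /B; case: ifP.
have mpre i A : measurable A -> measurable (X i @^-1` A).
  by move=> mA; have := hXmeas i measurableT A mA; rewrite setTI.
have mE S : measurable (E S).
  by apply: fin_bigcap_measurable; [exact: finite_finset | move=> i _; exact: mpre].
have hP1 i : P (X i @^-1` [set` `[c i, +oo[]) = (p i)%:E.
  rewrite hXlaw // exp_tail //; congr (expR _)%:E.
  by rewrite mulNr -mulrN opprB.
have hP0 i : P (X i @^-1` [set` `]-oo, c i[]) = (1 - p i)%:E.
  have -> : X i @^-1` [set` `]-oo, c i[] = ~` (X i @^-1` [set` `[c i, +oo[]).
    apply/seteqP; split => w /=; rewrite !in_itv /= ?andbT.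
      by move=> h1 h2; move: h1; rewrite ltNge h2.
    by move=> h; rewrite ltNge; apply/negP.
  rewrite probability_setC; last exact: mpre.
  by rewrite EFinB; congr (_ - _)%E; exact: hP1.
have hE S : E S = [set w | algA_set qq X w = S].
  apply/seteqP; split => w /=.
    move=> H; apply/setP => j; rewrite /algA_set inE -lerBlDl.
    have := H j I; rewrite /B /=; case: ifP => iS /=; rewrite in_itv /= ?andbT //.
    by move=> h; rewrite leNgt h.
  move=> H i _; rewrite /B -H /algA_set inE -lerBlDl; case: ifP => h /=;
    rewrite in_itv /= ?andbT //.
  by rewrite ltNge h.
have hPE S : P (E S) = (@wS R k.+1 p S)%:E.
  rewrite /E hXind // /wS -prodEFin; apply: eq_bigr => i _.
  by rewrite /B; case: ifP => _; rewrite ?hP1 ?hP0.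
set f := fun S : {set 'I_k.+1} => (r \in S)%:R / #|S|%:R : R.
have f0 S : 0 <= f S by rewrite /f divr_ge0.
have ind S w : \1_(E S) w = (algA_set qq X w == S)%:R :> R.
  rewrite indicE hE; case: eqP => h; [by rewrite mem_set | by rewrite memNset].
rewrite /algA_prob.
rewrite (eq_integral (fun w => \sum_(S : {set 'I_k.+1}) (f S * \1_(E S) w)%:E)); last first.
  move=> w _.
  under eq_bigr do rewrite ind.
  rewrite (bigD1 (algA_set qq X w)) //= eqxx mulr1 big1 ?addr0 //.
  by move=> S /negbTE; rewrite eq_sym => ->; rewrite mulr0.
rewrite ge0_integral_sum //; last first.
  - by move=> S w _; rewrite lee_fin mulr_ge0 // indicE ler0n.
  - by move=> S; apply/measurable_realfun.measurable_EFinP; apply: measurable_realfun.measurable_funM => //; exact: measurable_realfun.measurable_indic.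
rewrite -sumEFin; apply: eq_bigr => S _.
have := @integralZl_indic _ _ _ P setT measurableT (fun _ => E S) (f S).
rewrite /= => ->; last exact: mE.
  rewrite integral_indic // setIT EFinM; congr (_ * _)%E; exact/esym/hPE.
by move=> h; exfalso; move: h; rewrite ltNge f0.
Qed.
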